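(* For $d>0$ let $g_d$ be as in the context, let $h_d(x)=g_d(x)/\sqrt{1-x^2}$, $M(x)=e^{x/d}$, and $$c_2(d)=\frac{\int_0^\pi\cos\theta\,\sin^2\theta\,h_d(\cos\theta)M(\cos\theta)\sin\theta\,d\theta}{\int_0^\pi\sin^2\theta\,h_d(\cos\theta)M(\cos\theta)\sin\theta\,d\theta}.$$ Then $c_2(d)=\frac{1}{6d}+o\!\left(\frac1d\right)$ as $d\to+\infty$.
   Context: $g_d$ is the unique solution in $V=\{g:\ (1-x^2)^{-1/2}g\in L^2(-1,1),\ (1-x^2)^{1/2}\partial_xg\in L^2(-1,1)\}$ of $-(1-x^2)\partial_x[e^{x/d}(1-x^2)\partial_xg]+e^{x/d}g=-(1-x^2)^{3/2}e^{x/d}$ on $(-1,1)$ (this solution exists, is unique and is nonpositive). *)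

(* Defs.v *)
From Stdlib Require Import Reals Lra.
Open Scope R_scope.

Definition improper_int (f : R -> R) (a b l : R) : Prop :=
  forall eps, eps > 0 -> exists delta, delta > 0 /\
    forall a' b', a < a' < a + delta -> b - delta < b' < b ->
      exists pr : Riemann_integrable f a' b', Rabs (RiemannInt pr - l) < eps.

(* f is in L^2(a,b) (for functions continuous on (a,b)). *)
Definition sq_integrable (f : R -> R) (a b : R) : Prop :=
  exists l, improper_int (fun x => f x ^ 2) a b l.

Definition in_V (g g1 : R -> R) : Prop :=
  sq_integrable (fun x => g x / sqrt (1 - x ^ 2)) (-1) 1 /\
  sq_integrable (fun x => sqrt (1 - x ^ 2) * g1 x) (-1) 1.

Definition solves_gd (d : R) (g : R -> R) : Prop :=
  exists g1 p1 : R -> R,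
    (forall x, -1 < x < 1 -> derivable_pt_lim g x (g1 x)) /\
    in_V g g1 /\
    (forall x, -1 < x < 1 ->
       derivable_pt_lim (fun y => exp (y / d) * ((1 - y ^ 2) * g1 y)) x (p1 x) /\
       - (1 - x ^ 2) * p1 x + exp (x / d) * g x
         = - Rpower (1 - x ^ 2) (3 / 2) * exp (x / d)).

Definition h_d (g : R -> R) (x : R) : R := g x / sqrt (1 - x ^ 2).
Definition M_d (d x : R) : R := exp (x / d).

Definition c2_num_integrand (d : R) (g : R -> R) (t : R) : R :=
  cos t * sin t ^ 2 * h_d g (cos t) * M_d d (cos t) * sin t.
Definition c2_den_integrand (d : R) (g : R -> R) (t : R) : R :=
  sin t ^ 2 * h_d g (cos t) * M_d d (cos t) * sin t.

(* Main.v *)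
Require Import Defs.
From Stdlib Require Import Reals Lra Psatz Classical FunctionalExtensionality.
Open Scope R_scope.

Lemma FTC_loc (F f : R -> R) (a b : R) :
  a <= b ->
  (forall x, a <= x <= b -> derivable_pt_lim F x (f x)) ->
  (forall x, a <= x <= b -> continuity_pt f x) ->
  forall pr : Riemann_integrable f a b, RiemannInt pr = F b - F a.
Proof.
  intros hab hd hc pr.
  assert (A1 : antiderivative f F a b).
  { split; [|exact hab]. intros x hx. exists (exist _ (f x) (hd x hx)). reflexivity. }
  assert (A2 := RiemannInt_P29 hab hc).
  destruct (antiderivative_Ucte _ _ _ _ _ A1 A2) as [c hc'].
  rewrite (RiemannInt_P20 hab (FTC_P1 hab hc) pr).
  rewrite (hc' a), (hc' b); try lra.
Qed.

Lemma c_plus f g x : continuity_pt f x -> continuity_pt g x -> continuity_pt (fun y => f y + g y) x.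
Proof. intros; apply (continuity_pt_plus f g x); auto. Qed.
Lemma c_minus f g x : continuity_pt f x -> continuity_pt g x -> continuity_pt (fun y => f y - g y) x.
Proof. intros; apply (continuity_pt_minus f g x); auto. Qed.
Lemma c_mult f g x : continuity_pt f x -> continuity_pt g x -> continuity_pt (fun y => f y * g y) x.
Proof. intros; apply (continuity_pt_mult f g x); auto. Qed.
Lemma c_opp f x : continuity_pt f x -> continuity_pt (fun y => - f y) x.
Proof. intros; apply (continuity_pt_opp f x); auto. Qed.
Lemma c_inv f x : continuity_pt f x -> f x <> 0 -> continuity_pt (fun y => / f y) x.
Proof. intros; apply (continuity_pt_inv f x); auto. Qed.
Lemma c_div f g x : continuity_pt f x -> continuity_pt g x -> g x <> 0 -> continuity_pt (fun y => f y / g y) x.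
Proof. intros; apply (continuity_pt_div f g x); auto. Qed.
Lemma c_const c x : continuity_pt (fun _ => c) x.
Proof. apply continuity_pt_const. intros a b; reflexivity. Qed.
Lemma c_id x : continuity_pt (fun y => y) x.
Proof. apply derivable_continuous_pt. apply derivable_pt_id. Qed.
Lemma c_comp f h x : continuity_pt f x -> continuity_pt h (f x) -> continuity_pt (fun y => h (f y)) x.
Proof. intros; apply (continuity_pt_comp f h x); auto. Qed.
Lemma c_exp f x : continuity_pt f x -> continuity_pt (fun y => exp (f y)) x.
Proof. intros; apply (c_comp f exp); auto. apply derivable_continuous_pt, derivable_pt_exp. Qed.
Lemma c_cos f x : continuity_pt f x -> continuity_pt (fun y => cos (f y)) x.
Proof. intros; apply (c_comp f cos); auto. apply continuity_cos. Qed.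
Lemma c_sin f x : continuity_pt f x -> continuity_pt (fun y => sin (f y)) x.
Proof. intros; apply (c_comp f sin); auto. apply continuity_sin. Qed.
Lemma c_sqrt f x : continuity_pt f x -> 0 <= f x -> continuity_pt (fun y => sqrt (f y)) x.
Proof. intros; apply (c_comp f sqrt); auto. apply continuity_pt_sqrt; auto. Qed.
Lemma c_pow f n x : continuity_pt f x -> continuity_pt (fun y => f y ^ n) x.
Proof. intros; apply (c_comp f (fun z => z ^ n)); auto. apply derivable_continuous_pt, derivable_pt_pow. Qed.
Lemma c_abs f x : continuity_pt f x -> continuity_pt (fun y => Rabs (f y)) x.
Proof. intros; apply (c_comp f Rabs); auto. apply Rcontinuity_abs. Qed.

Ltac cont1 :=
  match goal with
  | |- continuity_pt (fun y => @?A y + @?B y) _ => apply (c_plus A B)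
  | |- continuity_pt (fun y => @?A y - @?B y) _ => apply (c_minus A B)
  | |- continuity_pt (fun y => @?A y * @?B y) _ => apply (c_mult A B)
  | |- continuity_pt (fun y => @?A y / @?B y) _ => apply (c_div A B)
  | |- continuity_pt (fun y => - @?A y) _ => apply (c_opp A)
  | |- continuity_pt (fun y => / @?A y) _ => apply (c_inv A)
  | |- continuity_pt (fun y => exp (@?A y)) _ => apply (c_exp A)
  | |- continuity_pt (fun y => cos (@?A y)) _ => apply (c_cos A)
  | |- continuity_pt (fun y => sin (@?A y)) _ => apply (c_sin A)
  | |- continuity_pt (fun y => sqrt (@?A y)) _ => apply (c_sqrt A)
  | |- continuity_pt (fun y => Rabs (@?A y)) _ => apply (c_abs A)
  | |- continuity_pt (fun y => @?A y ^ ?n) _ => apply (c_pow A n)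
  | |- continuity_pt (fun y => y) _ => apply c_id
  | |- continuity_pt (fun _ => ?c) _ => apply c_const
  end.
Ltac cont := repeat (cont1; cbv beta).
Lemma d_ext f x l l' : derivable_pt_lim f x l' -> l' = l -> derivable_pt_lim f x l.
Proof. intros; subst; auto. Qed.
Lemma d_plus f g x a b : derivable_pt_lim f x a -> derivable_pt_lim g x b -> derivable_pt_lim (fun y => f y + g y) x (a + b).
Proof. intros; apply (derivable_pt_lim_plus f g x); auto. Qed.
Lemma d_minus f g x a b : derivable_pt_lim f x a -> derivable_pt_lim g x b -> derivable_pt_lim (fun y => f y - g y) x (a - b).
Proof. intros; apply (derivable_pt_lim_minus f g x); auto. Qed.
Lemma d_mult f g x a b : derivable_pt_lim f x a -> derivable_pt_lim g x b -> derivable_pt_lim (fun y => f y * g y) x (a * g x + f x * b).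
Proof. intros; apply (derivable_pt_lim_mult f g x); auto. Qed.
Lemma d_div f g x a b : derivable_pt_lim f x a -> derivable_pt_lim g x b -> g x <> 0 -> derivable_pt_lim (fun y => f y / g y) x ((a * g x - b * f x) / Rsqr (g x)).
Proof. intros; apply (derivable_pt_lim_div f g x); auto. Qed.
Lemma d_opp f x a : derivable_pt_lim f x a -> derivable_pt_lim (fun y => - f y) x (- a).
Proof. intros; apply (derivable_pt_lim_opp f x); auto. Qed.
Lemma d_const c x : derivable_pt_lim (fun _ => c) x 0.
Proof. apply (derivable_pt_lim_const c x). Qed.
Lemma d_id x : derivable_pt_lim (fun y => y) x 1.
Proof. apply (derivable_pt_lim_id x). Qed.
Lemma d_exp f x a : derivable_pt_lim f x a -> derivable_pt_lim (fun y => exp (f y)) x (exp (f x) * a).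
Proof. intros; apply (derivable_pt_lim_comp f exp x); auto. apply derivable_pt_lim_exp. Qed.
Lemma d_cos f x a : derivable_pt_lim f x a -> derivable_pt_lim (fun y => cos (f y)) x (- sin (f x) * a).
Proof. intros; apply (derivable_pt_lim_comp f cos x); auto. apply derivable_pt_lim_cos. Qed.
Lemma d_sqrt f x a : derivable_pt_lim f x a -> 0 < f x -> derivable_pt_lim (fun y => sqrt (f y)) x (/ (2 * sqrt (f x)) * a).
Proof. intros; apply (derivable_pt_lim_comp f sqrt x); auto. apply derivable_pt_lim_sqrt; auto. Qed.
Lemma d_ln f x a : derivable_pt_lim f x a -> 0 < f x -> derivable_pt_lim (fun y => ln (f y)) x (/ (f x) * a).
Proof. intros; apply (derivable_pt_lim_comp f ln x); auto. apply derivable_pt_lim_ln; auto. Qed.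
Lemma d_pow f n x a : derivable_pt_lim f x a -> derivable_pt_lim (fun y => f y ^ n) x (INR n * f x ^ pred n * a).
Proof. intros; apply (derivable_pt_lim_comp f (fun z => z ^ n) x); auto. apply derivable_pt_lim_pow. Qed.

Ltac der1 :=
  match goal with
  | |- derivable_pt_lim (fun y => @?A y + @?B y) _ _ => apply (d_plus A B)
  | |- derivable_pt_lim (fun y => @?A y - @?B y) _ _ => apply (d_minus A B)
  | |- derivable_pt_lim (fun y => @?A y * @?B y) _ _ => apply (d_mult A B)
  | |- derivable_pt_lim (fun y => @?A y / @?B y) _ _ => apply (d_div A B)
  | |- derivable_pt_lim (fun y => - @?A y) _ _ => apply (d_opp A)
  | |- derivable_pt_lim (fun y => exp (@?A y)) _ _ => apply (d_exp A)
  | |- derivable_pt_lim (fun y => cos (@?A y)) _ _ => apply (d_cos A)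
  | |- derivable_pt_lim (fun y => sqrt (@?A y)) _ _ => apply (d_sqrt A)
  | |- derivable_pt_lim (fun y => ln (@?A y)) _ _ => apply (d_ln A)
  | |- derivable_pt_lim (fun y => @?A y ^ ?n) _ _ => apply (d_pow A n)
  | |- derivable_pt_lim (fun y => y) _ _ => apply d_id
  | |- derivable_pt_lim (fun _ => ?c) _ _ => apply d_const
  end.
Ltac der := repeat (der1; cbv beta).

Lemma sp3 s c : s^2 = c -> s^3 = s * c. Proof. intros h; rewrite <- h; ring. Qed.
Lemma sp4 s c : s^2 = c -> s^4 = c * c. Proof. intros h; rewrite <- h; ring. Qed.
Lemma sp5 s c : s^2 = c -> s^5 = s * (c * c). Proof. intros h; rewrite <- h; ring. Qed.
Lemma sp6 s c : s^2 = c -> s^6 = c * (c * c). Proof. intros h; rewrite <- h; ring. Qed.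
Ltac sred h := rewrite ?(sp6 _ _ h), ?(sp5 _ _ h), ?(sp4 _ _ h), ?(sp3 _ _ h), ?h.

Lemma sp7 s c : s^2 = c -> s^7 = s * (c * (c * c)). Proof. intros h; rewrite <- h; ring. Qed.
Lemma sp8 s c : s^2 = c -> s^8 = c * (c * (c * c)). Proof. intros h; rewrite <- h; ring. Qed.
Ltac sred2 h := rewrite ?(sp8 _ _ h), ?(sp7 _ _ h), ?(sp6 _ _ h), ?(sp5 _ _ h), ?(sp4 _ _ h), ?(sp3 _ _ h), ?h.
Lemma frac_eq A B C D : B <> 0 -> D <> 0 -> A * D = C * B -> A / B = C / D.
Proof. intros hb hd h. apply (Rmult_eq_reg_r (B * D)). field_simplify; auto. rewrite h; ring. apply Rmult_integral_contrapositive_currified; auto. Qed.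
Lemma frac_eq_l A B C : B <> 0 -> A = C * B -> A / B = C.
Proof. intros hb h. rewrite h. field. auto. Qed.
Lemma frac_eq_r A C D : D <> 0 -> A * D = C -> A = C / D.
Proof. intros hd h. rewrite <- h. field. auto. Qed.
Ltac sfield h :=
  field_simplify;
  [ first [ apply frac_eq | apply frac_eq_l | apply frac_eq_r | idtac ];
    [ .. | ring_simplify; sred2 h; ring ] | .. ].
Ltac nz := first [ lra | (apply Rgt_not_eq; nra) | (apply Rlt_not_eq; nra) ].

Definition cont_on (f:R->R) := forall x, -1 < x < 1 -> continuity_pt f x.
Definition BI (f : R -> R) : Prop :=
  cont_on f /\ (forall x, -1 < x < 1 -> 0 <= f x) /\
  exists K, forall a b (pr : Riemann_integrable f a b), -1 < a -> a <= b -> b < 1 -> RiemannInt pr <= K.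

Lemma Rabs_le_inv x a : Rabs x <= a -> -a <= x <= a.
Proof. intros h. unfold Rabs in h. destruct Rcase_abs in h; lra. Qed.

Lemma RI_on f a b : -1 < a -> a <= b -> b < 1 -> cont_on f -> Riemann_integrable f a b.
Proof. intros; apply continuity_implies_RiemannInt; auto. intros; apply H2; lra. Qed.

Lemma RI_const c a b (pr : Riemann_integrable (fun _ => c) a b) : RiemannInt pr = c * (b - a).
Proof. exact (RiemannInt_P15 pr). Qed.

Lemma RI_nonneg f a b (pr : Riemann_integrable f a b) : a <= b -> (forall x, a < x < b -> 0 <= f x) -> 0 <= RiemannInt pr.
Proof.
  intros hab h. pose (pc := RiemannInt_P14 a b 0).
  assert (E := RiemannInt_P15 pc).
  assert (L : RiemannInt pc <= RiemannInt pr) by (apply RiemannInt_P19; auto; intros; unfold fct_cte; apply h; auto).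
  lra.
Qed.

Lemma RI_le f g a b (pf : Riemann_integrable f a b) (pg : Riemann_integrable g a b) :
  a <= b -> (forall x, a < x < b -> f x <= g x) -> RiemannInt pf <= RiemannInt pg.
Proof. intros; apply RiemannInt_P19; auto. Qed.

Lemma RI_abs_le f g a b (pf : Riemann_integrable f a b) (pg : Riemann_integrable g a b) :
  a <= b -> (forall x, a < x < b -> Rabs (f x) <= g x) -> Rabs (RiemannInt pf) <= RiemannInt pg.
Proof.
  intros hab h.
  pose (p1 := RiemannInt_P10 1 pf pg). pose (p2 := RiemannInt_P10 (-1) pg pf).
  assert (E1 := RiemannInt_P13 pf pg p1). assert (E2 := RiemannInt_P13 pg pf p2).
  assert (N1 : 0 <= RiemannInt p1). { apply RI_nonneg; auto. intros x hx. specialize (h x hx).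
    apply Rabs_le_inv in h. lra. }
  assert (N2 : 0 <= RiemannInt p2). { apply RI_nonneg; auto. intros x hx. specialize (h x hx).
    apply Rabs_le_inv in h. lra. }
  apply Rabs_le. lra.
Qed.

Lemma RI_mono f a' a b b' (p1 : Riemann_integrable f a b) (p2 : Riemann_integrable f a' b') :
  a' <= a -> a <= b -> b <= b' -> (forall x, a' <= x <= b' -> continuity_pt f x) ->
  (forall x, a' < x < b' -> 0 <= f x) -> RiemannInt p1 <= RiemannInt p2.
Proof.
  intros h1 h2 h3 hc hn.
  assert (q1 : Riemann_integrable f a' a) by (apply continuity_implies_RiemannInt; auto; intros; apply hc; lra).
  assert (q2 : Riemann_integrable f a b') by (apply continuity_implies_RiemannInt; try lra; intros; apply hc; lra).
  assert (q3 : Riemann_integrable f b b') by (apply continuity_implies_RiemannInt; auto; intros; apply hc; lra).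
  assert (E1 := RiemannInt_P26 q1 q2 p2). assert (E2 := RiemannInt_P26 p1 q3 q2).
  assert (N1 : 0 <= RiemannInt q1) by (apply RI_nonneg; auto; intros; apply hn; lra).
  assert (N3 : 0 <= RiemannInt q3) by (apply RI_nonneg; auto; intros; apply hn; lra).
  lra.
Qed.

Lemma BI_of_improper f l : cont_on f -> (forall x, -1 < x < 1 -> 0 <= f x) ->
  improper_int f (-1) 1 l -> BI f.
Proof.
  intros hc hn hi. split; [auto|split; [auto|]].
  destruct (hi 1 Rlt_0_1) as [dl [hdl H]]. exists (l + 1).
  intros a b pr ha hab hb.
  set (a' := Rmin a (-1 + dl/2)). set (b' := Rmax b (1 - dl/2)).
  assert (A1 : -1 < a' < -1 + dl) by (unfold a'; unfold Rmin; destruct Rle_dec; lra).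
  assert (A2 : a' <= a) by (unfold a'; apply Rmin_l).
  assert (B1 : 1 - dl < b' < 1) by (unfold b'; unfold Rmax; destruct Rle_dec; lra).
  assert (B2 : b <= b') by (unfold b'; apply Rmax_l).
  destruct (H a' b') as [pr' hpr']; try lra.
  assert (M := RI_mono f a' a b b' pr pr' A2 hab B2 ltac:(intros; apply hc; lra) ltac:(intros; apply hn; lra)).
  apply Rabs_def2 in hpr'. lra.
Qed.

Lemma BI_dom f f1 f2 c1 c2 c3 : BI f1 -> BI f2 -> cont_on f ->
  (forall x, -1 < x < 1 -> 0 <= f x <= c1 * f1 x + c2 * f2 x + c3) ->
  0 <= c1 -> 0 <= c2 -> 0 <= c3 -> BI f.
Proof.
  intros [hc1 [hn1 [K1 hK1]]] [hc2 [hn2 [K2 hK2]]] hc h hc1p hc2p hc3p.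
  split; [auto|split; [intros x hx; apply h; auto|]].
  exists (c1 * K1 + c2 * K2 + c3 * 2).
  intros a b pr ha hab hb.
  pose (q0 := RI_on (fun _ => c3) a b ha hab hb (fun x _ => c_const c3 x)).
  pose (q1 := RI_on f1 a b ha hab hb hc1).
  pose (q2 := RI_on f2 a b ha hab hb hc2).
  pose (q3 := RiemannInt_P10 c1 q0 q1).
  pose (q4 := RiemannInt_P10 c2 q3 q2).
  assert (E3 := RiemannInt_P13 q0 q1 q3). assert (E4 := RiemannInt_P13 q3 q2 q4).
  assert (E0 := RI_const c3 a b q0).
  assert (L := RI_le _ _ a b pr q4 hab ltac:(intros x hx; cbv beta; specialize (h x ltac:(lra)); lra)).
  specialize (hK1 a b q1 ha hab hb). specialize (hK2 a b q2 ha hab hb).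
  assert (c1 * RiemannInt q1 <= c1 * K1) by (apply Rmult_le_compat_l; auto).
  assert (c2 * RiemannInt q2 <= c2 * K2) by (apply Rmult_le_compat_l; auto).
  assert (c3 * (b - a) <= c3 * 2) by (apply Rmult_le_compat_l; lra).
  lra.
Qed.

Lemma improper_nonneg f : BI f -> exists l, improper_int f (-1) 1 l.
Proof.
  intros [hc [hn [K hK]]].
  set (E := fun v => exists a b (pr : Riemann_integrable f a b), -1 < a /\ a <= b /\ b < 1 /\ v = RiemannInt pr).
  assert (Hb : bound E). { exists K. intros v [a [b [pr [h1 [h2 [h3 ->]]]]]]. apply hK; auto. }
  assert (He : exists v, E v).
  { exists (RiemannInt (RI_on f 0 0 ltac:(lra) ltac:(lra) ltac:(lra) hc)).
    exists 0, 0, (RI_on f 0 0 ltac:(lra) ltac:(lra) ltac:(lra) hc). repeat split; lra. }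
  destruct (completeness E Hb He) as [m [hub hlub]].
  exists m. intros eps heps.
  assert (Hex : exists v, E v /\ m - eps < v).
  { apply NNPP. intro Hn. assert (m <= m - eps); [|lra].
    apply hlub. intros v hv. apply Rnot_lt_le. intro hlt. apply Hn. exists v; auto. }
  destruct Hex as [v [[a0 [b0 [pr0 [h1 [h2 [h3 ->]]]]]] hv]].
  exists (Rmin (a0 + 1) (1 - b0)). split.
  { unfold Rmin; destruct Rle_dec; lra. }
  intros a' b' ha' hb'.
  assert (Q1 : a' < a0) by (unfold Rmin in ha'; destruct Rle_dec in ha'; lra).
  assert (Q2 : b0 < b') by (unfold Rmin in hb'; destruct Rle_dec in hb'; lra).
  exists (RI_on f a' b' ltac:(lra) ltac:(lra) ltac:(lra) hc).
  set (p := RI_on f a' b' _ _ _ hc).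
  assert (M := RI_mono f a' a0 b0 b' pr0 p ltac:(lra) h2 ltac:(lra) ltac:(intros; apply hc; lra) ltac:(intros; apply hn; lra)).
  assert (U : RiemannInt p <= m). { apply hub. exists a', b', p. repeat split; lra. }
  apply Rabs_def1; lra.
Qed.

Lemma improper_lin f g a b l1 l2 c : improper_int f a b l1 -> improper_int g a b l2 ->
  improper_int (fun x => f x + c * g x) a b (l1 + c * l2).
Proof.
  intros h1 h2 eps heps.
  set (e' := eps / (2 * (1 + Rabs c))).
  assert (he' : e' > 0). { unfold e'. apply Rdiv_lt_0_compat; auto. assert (0 <= Rabs c) by apply Rabs_pos. lra. }
  destruct (h1 e' he') as [d1 [hd1 H1]]. destruct (h2 e' he') as [d2 [hd2 H2]].
  exists (Rmin d1 d2). split. { unfold Rmin; destruct Rle_dec; lra. }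
  intros a' b' ha hb.
  assert (hm1 := Rmin_l d1 d2). assert (hm2 := Rmin_r d1 d2).
  destruct (H1 a' b') as [p1 hp1]; try lra. destruct (H2 a' b') as [p2 hp2]; try lra.
  exists (RiemannInt_P10 c p1 p2). rewrite (RiemannInt_P13 p1 p2).
  replace (RiemannInt p1 + c * RiemannInt p2 - (l1 + c * l2)) with
    ((RiemannInt p1 - l1) + c * (RiemannInt p2 - l2)) by ring.
  eapply Rle_lt_trans. apply Rabs_triang. rewrite Rabs_mult.
  assert (0 <= Rabs c) by apply Rabs_pos.
  assert (Rabs c * Rabs (RiemannInt p2 - l2) <= Rabs c * e') by (apply Rmult_le_compat_l; lra).
  assert (e' * (2 * (1 + Rabs c)) = eps) by (unfold e'; field; lra).
  nra.
Qed.

Lemma improper_ext f g a b l : (forall x, f x = g x) -> improper_int f a b l -> improper_int g a b l.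
Proof. intros h. replace g with f; auto. apply functional_extensionality; auto. Qed.

Lemma improper_dom f phi : cont_on f -> BI phi -> (forall x, -1 < x < 1 -> Rabs (f x) <= phi x) ->
  exists l, improper_int f (-1) 1 l.
Proof.
  intros hc hb h.
  assert (B : BI (fun x => f x + phi x)).
  { apply (BI_dom _ phi phi 2 0 0); auto.
    - intros x hx. apply (c_plus f phi); auto. apply hb; auto.
    - intros x hx. specialize (h x hx). apply Rabs_le_inv in h. lra.
    - lra. - lra. - lra. }
  destruct (improper_nonneg _ B) as [l1 h1]. destruct (improper_nonneg _ hb) as [l2 h2].
  exists (l1 + -1 * l2). eapply improper_ext; [|apply (improper_lin _ _ _ _ _ _ (-1) h1 h2)].
  intros; cbv beta; ring.
Qed.

Lemma cont_eps f x : continuity_pt f x -> forall eps, eps > 0 -> exists del, del > 0 /\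
  forall y, Rabs (y - x) < del -> Rabs (f y - f x) < eps.
Proof.
  intros hc eps heps. destruct (hc eps heps) as [del [hdel H]]. exists del. split; auto.
  intros y hy. destruct (Req_dec y x) as [->|hne].
  - rewrite Rminus_diag, Rabs_R0; auto.
  - apply (H y). split. { split; auto. unfold no_cond; auto. } exact hy.
Qed.

Lemma le_eps x K : (forall eps, eps > 0 -> x <= K + eps) -> x <= K.
Proof. intros h. apply Rnot_lt_le. intro hlt. specialize (h ((x - K)/2) ltac:(lra)). lra. Qed.

Lemma improper_bound f l Phi K : improper_int f (-1) 1 l ->
  (forall eps, eps > 0 -> forall a0 b0, -1 < a0 -> b0 < 1 -> exists a b, -1 < a < a0 /\ b0 < b < 1 /\
     forall pr : Riemann_integrable f a b, Rabs (RiemannInt pr - (Phi b - Phi a)) <= K + eps) ->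
  continuity_pt Phi 1 -> continuity_pt Phi (-1) ->
  Rabs (l - (Phi 1 - Phi (-1))) <= K.
Proof.
  intros hi h c1 c2. apply le_eps. intros eps heps.
  destruct (hi (eps/4) ltac:(lra)) as [d1 [hd1 H1]].
  destruct (cont_eps _ _ c1 (eps/4) ltac:(lra)) as [e1 [he1 E1]].
  destruct (cont_eps _ _ c2 (eps/4) ltac:(lra)) as [e2 [he2 E2]].
  set (m := Rmin d1 (Rmin e1 (Rmin e2 1))).
  assert (hm : 0 < m /\ m <= d1 /\ m <= e1 /\ m <= e2 /\ m <= 1).
  { unfold m; unfold Rmin; repeat destruct Rle_dec; lra. }
  destruct (h (eps/4) ltac:(lra) (-1 + m) (1 - m)) as [a [b [ha [hb Hab]]]]; try lra.
  destruct (H1 a b) as [pr hpr]; try lra.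
  specialize (Hab pr).
  specialize (E1 b ltac:(apply Rabs_def1; lra)). specialize (E2 a ltac:(apply Rabs_def1; lra)).
  apply Rabs_def2 in hpr. apply Rabs_def2 in E1. apply Rabs_def2 in E2. apply Rabs_le_inv in Hab.
  apply Rabs_le. lra.
Qed.

Definition Lat (x : R) := (ln (1 + x) - ln (1 - x)) / 2.

Lemma Lat_int eps a b (pr : Riemann_integrable (fun x => eps * / (1 - x^2)) a b) :
  -1 < a -> a <= b -> b < 1 -> RiemannInt pr = eps * Lat b - eps * Lat a.
Proof.
  intros ha hab hb. unfold Lat.
  apply (FTC_loc (fun x => eps * ((ln (1 + x) - ln (1 - x)) / 2))); auto.
  - intros x hx. eapply d_ext. der. all: try lra. unfold Rsqr; simpl. field. nra.
  - intros x hx. cont. intro h. nra.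
Qed.

Lemma ln_ge0 x : 1 <= x -> 0 <= ln x.
Proof. intros h. destruct (Req_dec x 1) as [->|hne]. rewrite ln_1; lra.
  left. rewrite <- ln_1. apply ln_increasing; lra. Qed.

Lemma big_T (c A : R) : -1 < c < 1 -> exists T, T >= 0 /\ T / 2 > A /\ exp (- T) < 1 - c /\ exp (-T) < 1 + c.
Proof.
  intros hc. exists (Rabs (2 * A) + Rabs (ln (1 - c)) + Rabs (ln (1 + c)) + 1).
  assert (h1 := Rabs_pos (2*A)). assert (h2 := Rabs_pos (ln (1-c))). assert (h3 := Rabs_pos (ln (1+c))).
  assert (h4 := Rle_abs (2*A)). assert (h5 := Rabs_Ropp (ln (1 - c))). assert (h6 := Rabs_Ropp (ln (1 + c))).
  assert (h7 := Rle_abs (- ln (1-c))). assert (h8 := Rle_abs (- ln (1+c))).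
  repeat split; try lra.
  - apply Rlt_le_trans with (exp (ln (1-c))); [apply exp_increasing; lra | rewrite exp_ln; lra].
  - apply Rlt_le_trans with (exp (ln (1+c))); [apply exp_increasing; lra | rewrite exp_ln; lra].
Qed.

Lemma bdry_right F phi : BI phi -> (forall x, -1 < x < 1 -> Rabs (F x) <= (1 - x^2) * phi x) ->
  forall eps, eps > 0 -> forall b0, b0 < 1 -> exists b, b0 < b < 1 /\ Rabs (F b) < eps.
Proof.
  intros [hc [hn [K hK]]] hF eps heps b0 hb0.
  apply NNPP. intro Hn.
  assert (Hge : forall x, Rmax b0 0 < x < 1 -> eps <= (1 - x^2) * phi x).
  { intros x hx. assert (hx1 : b0 < x) by (apply Rle_lt_trans with (Rmax b0 0); [apply Rmax_l|lra]).
    assert (hx0 : 0 < x) by (apply Rle_lt_trans with (Rmax b0 0); [apply Rmax_r|lra]).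
    apply Rle_trans with (Rabs (F x)); [|apply hF; lra].
    apply Rnot_lt_le. intro hlt. apply Hn. exists x. split; auto; lra. }
  set (c := Rmax b0 0).
  assert (hc0 : 0 <= c < 1) by (unfold c, Rmax; destruct Rle_dec; lra).
  destruct (big_T c ((K + eps * Lat c) / eps)) as [T [hT0 [hT1 [hT2 _]]]]; try lra.
  set (b := 1 - exp (- T)).
  assert (hb : c < b < 1) by (unfold b; assert (0 < exp (-T)) by apply exp_pos; lra).
  assert (Lb : Lat b >= T / 2).
  { unfold Lat, b. replace (1 - (1 - exp (-T))) with (exp (-T)) by ring. rewrite ln_exp.
    assert (exp (-T) <= 1). { rewrite <- exp_0. destruct (Req_dec T 0) as [->|]. rewrite Ropp_0; lra. left; apply exp_increasing; lra. }
    assert (0 <= ln (1 + (1 - exp (- T)))) by (apply ln_ge0; lra). lra. }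
  pose (p1 := RI_on phi c b ltac:(lra) ltac:(lra) ltac:(lra) hc).
  assert (hcc : cont_on (fun x => eps * / (1 - x^2))). { intros x hx. cont. nra. }
  pose (p2 := RI_on _ c b ltac:(lra) ltac:(lra) ltac:(lra) hcc).
  assert (E := Lat_int eps c b p2 ltac:(lra) ltac:(lra) ltac:(lra)).
  assert (L := RI_le _ _ c b p2 p1 ltac:(lra) ltac:(intros x hx; specialize (Hge x ltac:(unfold c in hx; lra));
     assert (0 < 1 - x^2) by nra; cbv beta; apply (Rmult_le_reg_l (1 - x^2)); auto;
     rewrite <- Rmult_assoc, (Rmult_comm (1-x^2) eps), Rmult_assoc, Rinv_r; lra)).
  specialize (hK c b p1 ltac:(lra) ltac:(lra) ltac:(lra)).
  assert (eps * Lat b >= eps * (T/2)) by (apply Rmult_ge_compat_l; lra).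
  assert (eps * (T / 2) > eps * ((K + eps * Lat c) / eps)) by (apply Rmult_gt_compat_l; lra).
  replace (eps * ((K + eps * Lat c) / eps)) with (K + eps * Lat c) in H0 by (field; lra).
  lra.
Qed.

Lemma bdry_left F phi : BI phi -> (forall x, -1 < x < 1 -> Rabs (F x) <= (1 - x^2) * phi x) ->
  forall eps, eps > 0 -> forall a0, -1 < a0 -> exists a, -1 < a < a0 /\ Rabs (F a) < eps.
Proof.
  intros [hc [hn [K hK]]] hF eps heps a0 ha0.
  apply NNPP. intro Hn.
  assert (Hge : forall x, -1 < x < Rmin a0 0 -> eps <= (1 - x^2) * phi x).
  { intros x hx. assert (hx1 : x < a0) by (apply Rlt_le_trans with (Rmin a0 0); [lra|apply Rmin_l]).
    assert (hx0 : x < 0) by (apply Rlt_le_trans with (Rmin a0 0); [lra|apply Rmin_r]).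
    apply Rle_trans with (Rabs (F x)); [|apply hF; lra].
    apply Rnot_lt_le. intro hlt. apply Hn. exists x. split; auto; lra. }
  set (c := Rmin a0 0).
  assert (hc0 : -1 < c <= 0) by (unfold c, Rmin; destruct Rle_dec; lra).
  destruct (big_T c ((K - eps * Lat c) / eps)) as [T [hT0 [hT1 [_ hT2]]]]; try lra.
  set (a := -1 + exp (- T)).
  assert (ha : -1 < a < c) by (unfold a; assert (0 < exp (-T)) by apply exp_pos; lra).
  assert (La : Lat a <= - (T / 2)).
  { unfold Lat, a. replace (1 + (-1 + exp (-T))) with (exp (-T)) by ring. rewrite ln_exp.
    assert (exp (-T) <= 1). { rewrite <- exp_0. destruct (Req_dec T 0) as [->|]. rewrite Ropp_0; lra. left; apply exp_increasing; lra. }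
    assert (0 <= ln (1 - (-1 + exp (- T)))) by (apply ln_ge0; lra). lra. }
  pose (p1 := RI_on phi a c ltac:(lra) ltac:(lra) ltac:(lra) hc).
  assert (hcc : cont_on (fun x => eps * / (1 - x^2))). { intros x hx. cont. nra. }
  pose (p2 := RI_on _ a c ltac:(lra) ltac:(lra) ltac:(lra) hcc).
  assert (E := Lat_int eps a c p2 ltac:(lra) ltac:(lra) ltac:(lra)).
  assert (L := RI_le _ _ a c p2 p1 ltac:(lra) ltac:(intros x hx; specialize (Hge x ltac:(unfold c in hx; lra));
     assert (0 < 1 - x^2) by nra; cbv beta; apply (Rmult_le_reg_l (1 - x^2)); auto;
     rewrite <- Rmult_assoc, (Rmult_comm (1-x^2) eps), Rmult_assoc, Rinv_r; lra)).
  specialize (hK a c p1 ltac:(lra) ltac:(lra) ltac:(lra)).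
  assert (eps * Lat a <= eps * (- (T/2))) by (apply Rmult_le_compat_l; lra).
  assert (eps * (T / 2) > eps * ((K - eps * Lat c) / eps)) by (apply Rmult_gt_compat_l; lra).
  replace (eps * ((K - eps * Lat c) / eps)) with (K - eps * Lat c) in H0 by (field; lra).
  lra.
Qed.

Lemma cos_in t : 0 < t < PI -> -1 < cos t < 1.
Proof.
  intros ht. assert (hs := sin_gt_0 t (proj1 ht) (proj2 ht)).
  assert (E := sin2_cos2 t). unfold Rsqr in E.
  assert (cos t * cos t < 1) by nra. split; nra.
Qed.

Lemma subst_cos f l : cont_on f -> improper_int f (-1) 1 l ->
  improper_int (fun t => f (cos t) * sin t) 0 PI l.
Proof.
  intros hc hi eps heps.
  destruct (hi eps heps) as [dx [hdx H]].
  destruct (cont_eps cos 0 (continuity_cos 0) dx hdx) as [dc [hdc C]].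
  rewrite cos_0 in C.
  assert (hPI := PI_RGT_0).
  exists (Rmin dc (PI/2)). split. { unfold Rmin; destruct Rle_dec; lra. }
  intros t1 t2 h1 h2.
  assert (m1 := Rmin_l dc (PI/2)). assert (m2 := Rmin_r dc (PI/2)).
  set (x1 := cos t1). set (x2 := cos t2).
  assert (X1 : -1 < x1 < 1) by (apply cos_in; lra).
  assert (X2 : -1 < x2 < 1) by (apply cos_in; lra).
  assert (X1b : 1 - dx < x1). { specialize (C t1 ltac:(rewrite Rminus_0_r; apply Rabs_def1; lra)).
    apply Rabs_def2 in C. unfold x1; lra. }
  assert (X2b : x2 < -1 + dx). { specialize (C (PI - t2) ltac:(rewrite Rminus_0_r; apply Rabs_def1; lra)).
    rewrite cos_minus, cos_PI, sin_PI in C. apply Rabs_def2 in C. unfold x2; lra. }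
  assert (X1p : 0 < x1) by (apply cos_gt_0; lra).
  assert (X2n : x2 < 0) by (apply cos_lt_0; lra).
  destruct (H x2 x1) as [prx hprx]; try lra.
  set (x2' := (x2 - 1)/2). set (x1' := (x1 + 1)/2).
  assert (hx' : x2' <= x1') by (unfold x2', x1'; lra).
  assert (C0 : forall x, x2' <= x <= x1' -> continuity_pt f x) by (intros; apply hc; unfold x2', x1' in *; lra).
  set (P := primitive hx' (FTC_P1 hx' C0)).
  assert (DP : forall x, x2' <= x <= x1' -> derivable_pt_lim P x (f x)) by (intros; apply RiemannInt_P28; auto).
  assert (Ex : RiemannInt prx = P x1 - P x2).
  { apply FTC_loc; try lra. intros; apply DP; unfold x2', x1'; lra. intros; apply hc; lra. }
  assert (ct : forall t, t1 <= t <= t2 -> continuity_pt (fun t => f (cos t) * sin t) t).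
  { intros t ht. assert (-1 < cos t < 1) by (apply cos_in; lra).
    apply (c_mult (fun t => f (cos t)) sin). apply (c_comp cos f). apply continuity_cos. apply hc; auto.
    apply continuity_sin. }
  assert (ht12 : t1 <= t2) by lra. exists (continuity_implies_RiemannInt ht12 ct).
  rewrite (FTC_loc (fun t => - P (cos t)) (fun t => f (cos t) * sin t)); try lra.
  - fold x1 x2. replace (- P x2 - - P x1) with (RiemannInt prx) by lra. auto.
  - intros t ht. eapply d_ext. apply d_opp. apply (derivable_pt_lim_comp cos P). apply derivable_pt_lim_cos.
    apply DP. assert (cos t <= x1 /\ x2 <= cos t).
    { unfold x1, x2. split.
      - destruct (Req_dec t t1) as [->|hne]; [lra|]. left; apply cos_decreasing_1; lra.
      - destruct (Req_dec t t2) as [->|hne]; [lra|]. left; apply cos_decreasing_1; lra. }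
    unfold x2', x1'; lra. ring.
  - intros; apply ct; lra.
Qed.

Lemma exp_up v : -1/2 <= v <= 1/2 -> exp v <= 1 + v + 2 * v^2.
Proof.
  intros hv. destruct (Rle_dec v 0) as [hn|hp].
  - assert (h1 := exp_ineq1_le (- v)).
    assert (h2 : exp v * exp (- v) = 1) by (rewrite <- exp_plus; replace (v + - v) with 0 by ring; apply exp_0).
    assert (0 < exp v) by apply exp_pos.
    assert (exp v * (1 - v) <= 1) by nra.
    assert ((1 - v) * (1 + v + 2 * v^2) >= 1) by nra.
    nra.
  - assert (h1 := exp_ineq1_le (- (v/2))).
    assert (h2 : exp (v/2) * exp (- (v/2)) = 1) by (rewrite <- exp_plus; replace (v/2 + - (v/2)) with 0 by ring; apply exp_0).
    assert (h3 : exp v = exp (v/2) * exp (v/2)) by (rewrite <- exp_plus; f_equal; field).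
    assert (0 < exp (v/2)) by apply exp_pos.
    assert (H4 : exp (v/2) * (1 - v/2) <= 1) by nra.
    assert (H5 : (1 - v/2)^2 * (1 + v + 2 * v^2) >= 1) by nra.
    assert (H6 : exp (v/2) * exp (v/2) * ((1 - v/2) * (1 - v/2)) <= 1).
    { assert (0 <= exp (v/2) * (1 - v/2)) by nra. nra. }
    nra.
Qed.

Lemma M_bounds x d : 2 <= d -> -1 <= x <= 1 ->
  1/2 <= exp (x/d) <= 2 /\ Rabs (exp (x/d) - 1) <= 2 / d /\ Rabs (exp (x/d) - 1 - x/d) <= 2 / d^2.
Proof.
  intros hd hx.
  set (a := 1/d). assert (ha : 0 < a <= 1/2) by (unfold a; split; [apply Rdiv_lt_0_compat; lra|
     apply (Rmult_le_reg_l d); try lra; field_simplify; lra]).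
  assert (hva : -a <= x/d <= a).
  { unfold a. split; apply (Rmult_le_reg_l d); try lra; field_simplify; lra. }
  assert (hv2 : (x/d)^2 <= a^2) by nra.
  assert (hv : -1/2 <= x/d <= 1/2) by lra.
  assert (U := exp_up _ hv). assert (L := exp_ineq1_le (x/d)).
  assert (E2 : 2 / d^2 = 2 * a^2) by (unfold a; field; lra).
  assert (E1 : 2 / d = 2 * a) by (unfold a; field; lra).
  rewrite E1, E2. repeat split; try nra; apply Rabs_le; split; nra.
Qed.

Lemma abs_prod_le a b A B : Rabs a <= A -> Rabs b <= B -> Rabs (a * b) <= A * B.
Proof. intros h1 h2. rewrite Rabs_mult. apply Rmult_le_compat; auto; apply Rabs_pos. Qed.

Lemma Rabs_sub_le a b : Rabs (a - b) <= Rabs a + Rabs b.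
Proof. unfold Rminus. eapply Rle_trans. apply Rabs_triang. rewrite Rabs_Ropp. lra. Qed.

Lemma amgm u d : d > 0 -> 2 * Rabs u <= 1/d + d * u^2.
Proof.
  intros hd. assert (h : 0 <= (d * Rabs u - 1)^2) by apply pow2_ge_0.
  assert (hu : Rabs u ^ 2 = u ^ 2) by (rewrite <- Rsqr_pow2, <- Rsqr_abs; unfold Rsqr; ring).
  apply (Rmult_le_reg_l d); auto. replace (d * (1/d + d * u^2)) with (1 + d^2 * u^2) by (field; lra).
  rewrite <- hu. nra.
Qed.

Lemma bD M d y u : 1/2 <= M <= 2 -> Rabs (M - 1) <= 2 / d -> 0 <= y <= 1 -> d > 0 ->
  Rabs (M * y * u - y * (M - 1) / 2) <= 2 / d + d * u^2.
Proof.
  intros hM h1 hy hd.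
  assert (A1 : Rabs (M * y * u) <= 2 * Rabs u).
  { rewrite Rabs_mult. apply Rmult_le_compat_r. apply Rabs_pos. rewrite Rabs_right by nra. nra. }
  assert (A2 : Rabs (y * (M - 1) / 2) <= 1 / d).
  { unfold Rdiv. rewrite !Rabs_mult. rewrite (Rabs_right y) by lra. rewrite (Rabs_right (/2)) by lra.
    assert (0 <= Rabs (M - 1)) by apply Rabs_pos.
    replace (1 / d) with ((2 / d) * / 2) by (field; lra). unfold Rdiv in h1 |- *.
    assert (y * Rabs (M - 1) <= 1 * (2 * / d)) by (apply Rmult_le_compat; lra).
    lra. }
  assert (A3 := amgm u d hd).
  eapply Rle_trans. apply Rabs_sub_le. lra.
Qed.

Lemma bG M d x y c u : 1/2 <= M <= 2 -> Rabs (M - 1) <= 2 / d -> Rabs (M - 1 - x / d) <= 2 / d^2 ->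
  0 <= y <= 1 -> -1 <= x <= 1 -> -1 <= c <= 1 -> d > 0 ->
  Rabs (x^2*y*(M - 1)/(12*d) + y*c*M*u/(6*d) - x*y*(M - 1 - x/d)/2) <= 2 / d^2 + u^2 / 6.
Proof.
  intros hM h1 h2 hy hx hc hd.
  assert (hid : 0 < /d) by (apply Rinv_0_lt_compat; lra).
  assert (T1 : Rabs (x^2*y*(M - 1)/(12*d)) <= 1 / (6 * d^2)).
  { replace (x^2*y*(M - 1)/(12*d)) with ((x^2*y) * ((M-1) * /(12*d))) by (field; lra).
    replace (1 / (6*d^2)) with (1 * ((2/d) * /(12*d))) by (field; lra).
    apply abs_prod_le. apply Rabs_le; nra.
    rewrite Rabs_mult. rewrite (Rabs_right (/(12*d))). apply Rmult_le_compat_r; auto. left; apply Rinv_0_lt_compat; lra.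
    left; apply Rinv_0_lt_compat; lra. }
  assert (T2 : Rabs (y*c*M*u/(6*d)) <= Rabs u / (3 * d)).
  { replace (y*c*M*u/(6*d)) with ((y*c*M) * (u * /(6*d))) by (field; lra).
    replace (Rabs u / (3*d)) with (2 * (Rabs u * /(6*d))) by (field; lra).
    apply abs_prod_le. assert (-1 <= y*c <= 1) by (split; nra). apply Rabs_le; split; nra.
    rewrite Rabs_mult. rewrite (Rabs_right (/(6*d))). lra. left; apply Rinv_0_lt_compat; lra. }
  assert (T3 : Rabs (x*y*(M - 1 - x/d)/2) <= 1 / d^2).
  { replace (x*y*(M - 1 - x/d)/2) with ((x*y/2) * (M - 1 - x/d)) by (field; lra).
    replace (1 / d^2) with ((1/2) * (2/d^2)) by (field; lra).
    apply abs_prod_le; auto. apply Rabs_le; split; nra. }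
  assert (A := amgm u d ltac:(lra)).
  assert (T2' : Rabs u / (3 * d) <= 1 / (6 * d^2) + u^2/6).
  { apply (Rmult_le_reg_l (6 * d)). nra.
    replace (6 * d * (Rabs u / (3 * d))) with (2 * Rabs u) by (field; lra).
    replace (6 * d * (1 / (6 * d ^ 2) + u ^ 2 / 6)) with (1 / d + d * u^2) by (field; lra). auto. }
  assert (E : 1 / (6 * d^2) = (1/6) * (1 / d^2)) by (field; lra).
  assert (0 < 1 / d^2) by (apply Rdiv_lt_0_compat; nra).
  eapply Rle_trans. apply Rabs_sub_le.
  eapply Rle_trans. apply Rplus_le_compat_r. apply Rabs_triang. lra.
Qed.

Definition sq (x : R) := sqrt (1 - x^2).
Definition ee (G : R -> R) x := G x + sq x / 2.
Definition uu (G : R -> R) x := ee G x / sq x.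
Definition vv (g1 : R -> R) x := sq x * g1 x - x / 2.
Definition QQ d (g1 : R -> R) x := exp (x / d) * ((1 - x ^ 2) * g1 x).
Definition Q0 d x := exp (x / d) * (x * sq x) / 2.
Definition FF d G g1 x := (QQ d g1 x - Q0 d x) * ee G x.
Definition Fp d G g1 x := exp (x/d) * (uu G x ^ 2 - x * (1 - x^2) * uu G x / (2 * d) + vv g1 x ^ 2).
Definition BB d G g1 x := (QQ d g1 x - Q0 d x) * (x * sq x / 6) - exp (x / d) * sq x * (1 - 2 * x^2) / 6 * ee G x.
Definition fN d G x := x * (1 - x^2) * h_d G x * M_d d x.
Definition fD d G x := (1 - x^2) * h_d G x * M_d d x.
Definition PhiN d x := -(1/2)*(x^2/2 - x^4/4) + (1/(12*d) - 1/(2*d))*(x^3/3 - x^5/5).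
Definition PhiD (x : R) := -(1/2)*(x - x^3/3).
Definition Gres d G x := x^2*(1-x^2)*(exp(x/d) - 1)/(12*d) + (1-x^2)*(1-2*x^2)*exp(x/d)*uu G x/(6*d)
   - x*(1-x^2)*(exp(x/d) - 1 - x/d)/2.

Definition HYP (d : R) (G g1 p1 : R -> R) : Prop :=
  2 <= d /\
  (forall x, -1 < x < 1 -> derivable_pt_lim G x (g1 x)) /\
  (forall x, -1 < x < 1 -> derivable_pt_lim (QQ d g1) x (p1 x)) /\
  (forall x, -1 < x < 1 -> p1 x = (exp (x/d) * G x + (1 - x^2) * sq x * exp (x/d)) / (1 - x^2)).

Lemma Rpow32 y : 0 < y -> Rpower y (3/2) = y * sqrt y.
Proof.
  intros hy. replace (3/2) with (1 + /2) by field. rewrite Rpower_plus, Rpower_1, Rpower_sqrt; auto.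
Qed.

Lemma sq_pos x : -1 < x < 1 -> 0 < sq x.
Proof. intros; unfold sq; apply sqrt_lt_R0; nra. Qed.
Lemma sq_sq x : -1 < x < 1 -> sq x ^ 2 = 1 - x^2.
Proof. intros; unfold sq; rewrite pow2_sqrt; nra. Qed.

Lemma Dsq x : -1 < x < 1 -> derivable_pt_lim sq x (- x / sq x).
Proof.
  intros hx. unfold sq. eapply d_ext. der. nra. fold (sq x).
  assert (sq x > 0) by (apply sq_pos; auto). simpl. field. lra.
Qed.

Lemma csq x : -1 < x < 1 -> continuity_pt sq x.
Proof. intros; apply derivable_continuous_pt. exists (- x / sq x). apply Dsq; auto. Qed.

Lemma DQ0 d x : d > 0 -> -1 < x < 1 ->
  derivable_pt_lim (Q0 d) x (exp (x/d) * (x * sq x / (2*d) + (1 - 2 * x^2) / (2 * sq x))).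
Proof.
  intros hd hx. unfold Q0. eapply d_ext. der. all: try lra. apply Dsq; auto.
  assert (hs := sq_pos x hx). assert (hs2 := sq_sq x hx).
  unfold Rsqr; simpl INR; simpl pred.
  field_simplify; try lra. sred hs2. field. lra.
Qed.

Lemma cont_loc_ext f h x r : r > 0 -> (forall y, Rabs (y - x) < r -> f y = h y) ->
  continuity_pt h x -> continuity_pt f x.
Proof.
  intros hr he hc eps heps. destruct (hc eps heps) as [del [hdel H]].
  exists (Rmin del r). split. { unfold Rmin; destruct Rle_dec; lra. }
  intros y [hy1 hy2]. simpl in *. unfold Rdist in *.
  rewrite (he y), (he x). apply H. split; auto. apply Rlt_le_trans with (Rmin del r); auto. apply Rmin_l.
  rewrite Rminus_diag, Rabs_R0; auto. apply Rlt_le_trans with (Rmin del r); auto. apply Rmin_r.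
Qed.

Lemma hyp_cG d G g1 p1 : HYP d G g1 p1 -> cont_on G.
Proof. intros [_ [H _]] x hx. apply derivable_continuous_pt. exists (g1 x). apply H; auto. Qed.

Lemma hyp_cg1 d G g1 p1 : HYP d G g1 p1 -> cont_on g1.
Proof.
  intros [hd [_ [HQ _]]] x hx.
  apply (cont_loc_ext _ (fun y => QQ d g1 y / (exp (y/d) * (1 - y^2))) x (Rmin (x+1) (1-x))).
  - unfold Rmin; destruct Rle_dec; lra.
  - intros y hy. assert (hm1 := Rmin_l (x+1) (1-x)). assert (hm2 := Rmin_r (x+1) (1-x)).
    apply Rabs_def2 in hy. unfold QQ. assert (0 < exp (y/d)) by apply exp_pos. field. split; nra.
  - cont. all: try lra. apply derivable_continuous_pt. exists (p1 x). apply HQ; auto.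
    apply Rgt_not_eq; apply Rmult_lt_0_compat; [apply exp_pos | nra].
Qed.

Ltac cl H :=
  match goal with
  | |- continuity_pt sq _ => apply csq; lra
  | |- continuity_pt (fun y => sq y) _ => apply csq; lra
  | |- _ => apply (hyp_cG _ _ _ _ H); lra
  | |- _ => apply (hyp_cg1 _ _ _ _ H); lra
  end.

Lemma cuu d G g1 p1 : HYP d G g1 p1 -> cont_on (uu G).
Proof. intros H x hx. assert (sq x > 0) by (apply sq_pos; auto). unfold uu, ee. cont; try cl H; lra. Qed.
Lemma cvv d G g1 p1 : HYP d G g1 p1 -> cont_on (vv g1).
Proof. intros H x hx. unfold vv. cont; try cl H; lra. Qed.

Ltac cl2 H := first [ cl H | apply (cuu _ _ _ _ H); lra | apply (cvv _ _ _ _ H); lra ].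

Lemma cFp d G g1 p1 : HYP d G g1 p1 -> cont_on (Fp d G g1).
Proof. intros H x hx. assert (2 <= d) by apply H. unfold Fp. cont; try cl2 H; lra. Qed.

Lemma De d G g1 p1 x : HYP d G g1 p1 -> -1 < x < 1 -> derivable_pt_lim (ee G) x (g1 x - x / (2 * sq x)).
Proof.
  intros [hd [HG _]] hx. unfold ee. eapply d_ext. apply (d_plus G (fun y => sq y / 2)). apply HG; auto.
  der. apply Dsq; auto. lra. assert (sq x > 0) by (apply sq_pos; auto). unfold Rsqr. field. lra.
Qed.

Lemma DFF d G g1 p1 x : HYP d G g1 p1 -> -1 < x < 1 -> derivable_pt_lim (FF d G g1) x (Fp d G g1 x).
Proof.
  intros H hx. pose proof H as [hd [HG [HQ Hp]]].
  unfold FF. eapply d_ext. apply (d_mult (fun y => QQ d g1 y - Q0 d y) (ee G)).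
  apply (d_minus (QQ d g1) (Q0 d)). apply HQ; auto. apply DQ0; auto; lra. apply (De _ _ _ _ _ H hx).
  rewrite Hp by auto.
  assert (hs := sq_pos x hx). assert (hs2 := sq_sq x hx).
  unfold Fp, uu, vv, QQ, Q0, ee.
  assert (0 < 1 - x^2) by nra.
  assert (0 < sq x * d) by nra. sfield hs2. all: try (split; lra). all: nz.
Qed.

Lemma ineq_F M u w v W : 1/2 <= M <= 2 -> w^2 <= W -> M * (u^2 - w * u + v^2) >= u^2/4 - W.
Proof.
  intros hM hw. assert (0 <= (u-w)^2) by apply pow2_ge_0. assert (0 <= v^2) by apply pow2_ge_0.
  assert (P : u^2 - w*u + v^2 >= u^2/2 - w^2/2) by nra.
  destruct (Rle_dec 0 (u^2 - w*u + v^2)) as [hp|hn]; nra.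
Qed.

Lemma Fp_lower d G g1 p1 x : HYP d G g1 p1 -> -1 < x < 1 -> Fp d G g1 x >= uu G x ^ 2 / 4 - 1 / (4 * d^2).
Proof.
  intros H hx. assert (hd : 2 <= d) by apply H.
  destruct (M_bounds x d hd ltac:(lra)) as [hM _].
  unfold Fp. replace (uu G x ^ 2 - x * (1 - x ^ 2) * uu G x / (2 * d) + vv g1 x ^ 2) with
    (uu G x ^ 2 - (x * (1 - x ^ 2) / (2 * d)) * uu G x + vv g1 x ^ 2) by (field; lra).
  apply ineq_F; auto.
  replace ((x * (1 - x ^ 2) / (2 * d)) ^ 2) with ((x * (1 - x^2))^2 * (1 / (4 * d^2))) by (field; lra).
  assert (0 < 1 / (4 * d^2)) by (apply Rdiv_lt_0_compat; nra).
  assert ((x * (1 - x^2))^2 <= 1) by (assert (0 < 1 - x^2) by nra; nra).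
  nra.
Qed.

Lemma ineq_uv M y u v : 1/2 <= M <= 2 -> 0 <= y -> Rabs (M * y * (u * v)) <= y * (u^2 + v^2).
Proof.
  intros hM hy. assert (h1 : 0 <= (u+v)^2) by apply pow2_ge_0. assert (h2 : 0 <= (u-v)^2) by apply pow2_ge_0.
  assert (h3 : Rabs (M * (u * v)) <= u^2 + v^2).
  { destruct (Rle_dec 0 (u*v)).
    - rewrite Rabs_right by nra. nra.
    - rewrite Rabs_left by nra. nra. }
  replace (M * y * (u * v)) with (y * (M * (u * v))) by ring. rewrite Rabs_mult, (Rabs_right y) by lra.
  apply Rmult_le_compat_l; auto.
Qed.

Lemma FF_id d G g1 x : d > 0 -> -1 < x < 1 -> FF d G g1 x = exp (x/d) * (1 - x^2) * (uu G x * vv g1 x).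
Proof.
  intros hd hx. assert (hs := sq_pos x hx). assert (hs2 := sq_sq x hx).
  unfold FF, QQ, Q0, uu, vv, ee. sfield hs2. all: nz.
Qed.

Lemma BI_uv d G g1 p1 : HYP d G g1 p1 -> BI (fun x => uu G x ^ 2) -> BI (fun x => vv g1 x ^ 2) ->
  BI (fun x => uu G x ^ 2 + vv g1 x ^ 2).
Proof.
  intros H Bu Bv. apply (BI_dom _ _ _ 1 1 0 Bu Bv).
  - intros x hx. apply (c_plus (fun y => uu G y ^ 2) (fun y => vv g1 y ^ 2)); apply (c_pow (fun y => _ y));
    [apply (cuu _ _ _ _ H)|apply (cvv _ _ _ _ H)]; auto.
  - intros x hx. split; nra.
  - lra. - lra. - lra.
Qed.

Lemma energy d G g1 p1 : HYP d G g1 p1 -> BI (fun x => uu G x ^ 2) -> BI (fun x => vv g1 x ^ 2) ->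
  forall a b (pr : Riemann_integrable (fun x => uu G x ^ 2) a b), -1 < a -> a <= b -> b < 1 ->
  RiemannInt pr <= 2 / d^2.
Proof.
  intros H Bu Bv a b pr ha hab hb. assert (hd : 2 <= d) by apply H.
  assert (Buv := BI_uv _ _ _ _ H Bu Bv).
  assert (HFb : forall x, -1 < x < 1 -> Rabs (FF d G g1 x) <= (1 - x^2) * (uu G x ^ 2 + vv g1 x ^ 2)).
  { intros x hx. rewrite FF_id by lra. destruct (M_bounds x d hd ltac:(lra)) as [hM _].
    apply ineq_uv; auto; nra. }
  apply le_eps. intros eps heps.
  destruct (bdry_left _ _ Buv HFb (eps/8) ltac:(lra) a ha) as [a' [ha' Fa]].
  destruct (bdry_right _ _ Buv HFb (eps/8) ltac:(lra) b hb) as [b' [hb' Fb]].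
  assert (cu : cont_on (fun x => uu G x ^ 2)) by (intros x hx; apply (c_pow (uu G)); apply (cuu _ _ _ _ H); auto).
  pose (p1' := RI_on _ a' b' ltac:(lra) ltac:(lra) ltac:(lra) cu).
  assert (M1 := RI_mono _ a' a b b' pr p1' ltac:(lra) hab ltac:(lra) ltac:(intros; apply cu; lra) ltac:(intros; nra)).
  pose (pF := RI_on _ a' b' ltac:(lra) ltac:(lra) ltac:(lra) (cFp _ _ _ _ H)).
  assert (EF := FTC_loc (FF d G g1) (Fp d G g1) a' b' ltac:(lra) ltac:(intros; apply (DFF _ _ _ _ _ H); lra)
     ltac:(intros; apply (cFp _ _ _ _ H); lra) pF).
  pose (pc := RI_on (fun _ => - (1 / (4 * d^2))) a' b' ltac:(lra) ltac:(lra) ltac:(lra) (fun x _ => c_const _ x)).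
  pose (pl := RiemannInt_P10 (1/4) pc p1').
  assert (El := RiemannInt_P13 pc p1' pl). assert (Ec := RI_const _ _ _ pc).
  assert (Le := RI_le _ _ a' b' pl pF ltac:(lra) ltac:(intros x hx; cbv beta; assert (Fl := Fp_lower _ _ _ _ x H ltac:(lra)); lra)).
  apply Rabs_def2 in Fa. apply Rabs_def2 in Fb.
  assert (0 < 1 / (4 * d^2)) by (apply Rdiv_lt_0_compat; nra).
  assert ((b' - a') * (1 / (4 * d^2)) <= 2 * (1 / (4 * d^2))) by (apply Rmult_le_compat_r; lra).
  replace (2 / d^2) with (8 * (1 / (4 * d^2))) by (field; lra).
  lra.
Qed.

Lemma est_int f Phi phi' w K0 K1 U a b : -1 < a -> a <= b -> b < 1 -> cont_on f -> cont_on phi' -> cont_on w ->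
  (forall x, a <= x <= b -> derivable_pt_lim Phi x (phi' x)) ->
  (forall x, -1 < x < 1 -> Rabs (f x - phi' x) <= K0 + K1 * w x) -> 0 <= K0 -> 0 <= K1 ->
  (forall pr : Riemann_integrable w a b, RiemannInt pr <= U) ->
  forall pr : Riemann_integrable f a b, Rabs (RiemannInt pr - (Phi b - Phi a)) <= 2 * K0 + K1 * U.
Proof.
  intros ha hab hb cf cp cw hd hbd hK0 hK1 hU pr.
  pose (pp := RI_on phi' a b ha hab hb cp).
  assert (E1 := FTC_loc Phi phi' a b hab hd ltac:(intros; apply cp; lra) pp).
  pose (pd := RiemannInt_P10 (-1) pr pp). assert (E2 := RiemannInt_P13 pr pp pd).
  pose (pw := RI_on w a b ha hab hb cw).
  pose (pc := RI_on (fun _ => K0) a b ha hab hb (fun x _ => c_const K0 x)).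
  pose (pb := RiemannInt_P10 K1 pc pw). assert (E3 := RiemannInt_P13 pc pw pb).
  assert (E4 := RI_const _ _ _ pc).
  assert (L := RI_abs_le _ _ a b pd pb hab ltac:(intros x hx; cbv beta;
     replace (f x + -1 * phi' x) with (f x - phi' x) by ring; apply hbd; lra)).
  specialize (hU pw).
  assert (K0 * (b - a) <= K0 * 2) by (apply Rmult_le_compat_l; lra).
  assert (K1 * RiemannInt pw <= K1 * U) by (apply Rmult_le_compat_l; lra).
  replace (RiemannInt pr - (Phi b - Phi a)) with (RiemannInt pd) by lra.
  lra.
Qed.

Lemma fD_id d G x : d > 0 -> -1 < x < 1 ->
  fD d G x - (-(1/2) * (1 - x^2)) = exp (x/d) * (1 - x^2) * uu G x - (1 - x^2) * (exp (x/d) - 1) / 2.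
Proof.
  intros hd hx. assert (hs := sq_pos x hx). assert (hs2 := sq_sq x hx).
  unfold fD, h_d, M_d, uu, ee. fold (sq x). sfield hs2. all: nz.
Qed.

Lemma fD_id2 d G x : d > 0 -> -1 < x < 1 ->
  fD d G x = exp (x/d) * (1 - x^2) * (uu G x - 1/2).
Proof.
  intros hd hx. assert (hs := sq_pos x hx). assert (hs2 := sq_sq x hx).
  unfold fD, h_d, M_d, uu, ee. fold (sq x). sfield hs2. all: nz.
Qed.

Lemma BB_id d G g1 x : d > 0 -> -1 < x < 1 ->
  BB d G g1 x = exp (x/d) * (1 - x^2) * (x * vv g1 x - (1 - 2 * x^2) * uu G x) / 6.
Proof.
  intros hd hx. assert (hs := sq_pos x hx). assert (hs2 := sq_sq x hx).
  unfold BB, QQ, Q0, uu, vv, ee. sfield hs2. all: nz.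
Qed.

Lemma DPsi d G g1 p1 x : HYP d G g1 p1 -> -1 < x < 1 ->
  derivable_pt_lim (fun y => BB d G g1 y + PhiN d y) x (fN d G x - Gres d G x).
Proof.
  intros H hx. pose proof H as [hd [HG [HQ Hp]]].
  assert (hs := sq_pos x hx). assert (hs2 := sq_sq x hx).
  unfold BB, PhiN. eapply d_ext. der.
  all: try (apply HQ; auto). all: try (apply DQ0; auto; lra). all: try (apply (De _ _ _ _ _ H hx)).
  all: try (apply Dsq; auto). all: try lra.
  rewrite Hp by auto.
  unfold fN, Gres, h_d, M_d, uu, QQ, Q0, ee. fold (sq x). unfold Rsqr. simpl INR. simpl pred.
  assert (0 < sq x * d) by nra.
  assert (0 < sq x * d^2 * (1 - x^2)) by (assert (0 < 1 - x^2) by nra; apply Rmult_lt_0_compat; nra). sfield hs2. all: repeat split; nz.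
Qed.

Lemma ineq_B M y x c u v : 1/2 <= M <= 2 -> 0 <= y -> -1 <= x <= 1 -> -1 <= c <= 1 ->
  Rabs (M * y * (x * v - c * u) / 6) <= y * (u^2 + v^2 + 1).
Proof.
  intros hM hy hx hc.
  assert (A : Rabs (x * v - c * u) <= Rabs v + Rabs u).
  { eapply Rle_trans. apply Rabs_sub_le. rewrite !Rabs_mult.
    assert (Rabs x <= 1) by (apply Rabs_le; lra). assert (Rabs c <= 1) by (apply Rabs_le; lra).
    assert (0 <= Rabs v) by apply Rabs_pos. assert (0 <= Rabs u) by apply Rabs_pos. nra. }
  assert (Au := amgm u 1 ltac:(lra)). assert (Av := amgm v 1 ltac:(lra)).
  replace (M * y * (x * v - c * u) / 6) with ((M * y / 6) * (x * v - c * u)) by field.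
  rewrite Rabs_mult. rewrite (Rabs_right (M * y / 6)) by nra.
  assert (0 <= Rabs (x * v - c * u)) by apply Rabs_pos.
  assert (M * y / 6 <= y / 3) by nra.
  assert (y / 3 * Rabs (x * v - c * u) <= y / 3 * (Rabs v + Rabs u)) by (apply Rmult_le_compat_l; lra).
  assert (y / 3 * (Rabs v + Rabs u) <= y * (u^2 + v^2 + 1)) by nra.
  nra.
Qed.

Lemma ineq_f M y u : 1/2 <= M <= 2 -> 0 <= y <= 1 -> Rabs (M * y * (u - 1/2)) <= u^2 + 2.
Proof.
  intros hM hy. assert (Au := amgm u 1 ltac:(lra)).
  rewrite Rabs_mult. rewrite (Rabs_right (M*y)) by nra.
  assert (Rabs (u - 1/2) <= Rabs u + 1/2) by (eapply Rle_trans; [apply Rabs_sub_le|]; rewrite (Rabs_right (1/2)) by lra; lra).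
  assert (0 <= Rabs (u - 1/2)) by apply Rabs_pos. assert (M*y <= 2) by nra.
  assert (M*y*Rabs(u-1/2) <= 2*Rabs(u-1/2)) by (apply Rmult_le_compat_r; lra). lra.
Qed.

Lemma per_d d G g1 p1 : HYP d G g1 p1 -> BI (fun x => uu G x ^ 2) -> BI (fun x => vv g1 x ^ 2) ->
  exists lN lD, improper_int (fN d G) (-1) 1 lN /\ improper_int (fD d G) (-1) 1 lD /\
    Rabs (lN - (- 1 / (9 * d))) <= 5 / d^2 /\ Rabs (lD - (- 2 / 3)) <= 6 / d.
Proof.
  intros H Bu Bv. assert (hd : 2 <= d) by apply H.
  assert (cu := cuu _ _ _ _ H). assert (cv := cvv _ _ _ _ H). assert (cG := hyp_cG _ _ _ _ H).
  assert (cw : cont_on (fun x => uu G x ^ 2)) by (intros x hx; apply (c_pow (uu G)); auto).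
  assert (cfD : cont_on (fD d G)).
  { intros x hx. unfold fD, h_d, M_d. cont; try (apply cG; auto); try lra; try nra.
    apply Rgt_not_eq, sqrt_lt_R0; nra. }
  assert (cfN : cont_on (fN d G)).
  { intros x hx. unfold fN, h_d, M_d. cont; try (apply cG; auto); try lra; try nra.
    apply Rgt_not_eq, sqrt_lt_R0; nra. }
  assert (cGr : cont_on (Gres d G)).
  { intros x hx. unfold Gres. cont; try (apply cu; auto); lra. }
  assert (B2 : BI (fun x => uu G x ^ 2 + 2)).
  { apply (BI_dom _ _ _ 1 0 2 Bu Bu); try lra.
    - intros x hx. apply (c_plus (fun y => uu G y ^ 2) (fun _ => 2)); [apply cw; auto | apply c_const].
    - intros x hx. assert (0 <= uu G x ^ 2) by apply pow2_ge_0. lra. }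
  assert (B3 : BI (fun x => uu G x ^ 2 + vv g1 x ^ 2 + 1)).
  { apply (BI_dom _ _ _ 1 1 1 Bu Bv); try lra.
    - intros x hx. apply (c_plus (fun y => uu G y ^ 2 + vv g1 y ^ 2) (fun _ => 1)); [|apply c_const].
      apply (c_plus (fun y => uu G y ^ 2) (fun y => vv g1 y ^ 2)). apply cw; auto. apply (c_pow (vv g1)); auto.
    - intros x hx. assert (0 <= uu G x ^ 2) by apply pow2_ge_0. assert (0 <= vv g1 x ^ 2) by apply pow2_ge_0. lra. }
  assert (Mb : forall x, -1 < x < 1 -> 1/2 <= exp (x/d) <= 2 /\ Rabs (exp (x/d) - 1) <= 2 / d /\
     Rabs (exp (x/d) - 1 - x/d) <= 2 / d^2) by (intros; apply M_bounds; lra).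
  destruct (improper_dom (fD d G) _ cfD B2) as [lD hD].
  { intros x hx. rewrite fD_id2 by lra. destruct (Mb x hx) as [hM _]. apply ineq_f; auto; nra. }
  destruct (improper_dom (fN d G) _ cfN B2) as [lN hN].
  { intros x hx. unfold fN. replace (x * (1 - x ^ 2) * h_d G x * M_d d x) with (x * fD d G x) by (unfold fD; ring).
    rewrite fD_id2 by lra. destruct (Mb x hx) as [hM _].
    replace (x * (exp (x / d) * (1 - x ^ 2) * (uu G x - 1 / 2))) with (exp (x / d) * (x * (1 - x ^ 2)) * (uu G x - 1 / 2)) by ring.
    rewrite Rabs_mult. assert (Rabs (exp (x / d) * (x * (1 - x ^ 2))) <= 2).
    { rewrite Rabs_mult, Rabs_right by lra. assert (0 <= 1 - x^2 <= 1) by nra. assert (Rabs (x * (1 - x^2)) <= 1) by (apply Rabs_le; split; nra).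
      assert (0 <= Rabs (x * (1 - x^2))) by apply Rabs_pos. nra. }
    assert (Au := amgm (uu G x) 1 ltac:(lra)).
    assert (Rabs (uu G x - 1/2) <= Rabs (uu G x) + 1/2) by (eapply Rle_trans; [apply Rabs_sub_le|]; rewrite (Rabs_right (1/2)) by lra; lra).
    assert (0 <= Rabs (uu G x - 1/2)) by apply Rabs_pos. assert (0 <= Rabs (exp (x / d) * (x * (1 - x ^ 2)))) by apply Rabs_pos.
    nra. }
  exists lN, lD. split; auto. split; auto. split.
  -
    replace (- 1 / (9 * d)) with (PhiN d 1 - PhiN d (-1)) by (unfold PhiN; field; lra).
    apply (improper_bound _ _ _ _ hN).
    + intros eps heps a0 b0 ha0 hb0.
      assert (HBb : forall x, -1 < x < 1 -> Rabs (BB d G g1 x) <= (1 - x^2) * (uu G x ^ 2 + vv g1 x ^ 2 + 1)).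
      { intros x hx. rewrite BB_id by lra. destruct (Mb x hx) as [hM _]. apply ineq_B; auto; nra. }
      destruct (bdry_left _ _ B3 HBb (eps/2) ltac:(lra) (Rmin a0 0) ltac:(unfold Rmin; destruct Rle_dec; lra)) as [a [ha Ba]].
      destruct (bdry_right _ _ B3 HBb (eps/2) ltac:(lra) (Rmax b0 0) ltac:(unfold Rmax; destruct Rle_dec; lra)) as [b [hb Bb]].
      assert (m1 := Rmin_l a0 0). assert (m2 := Rmin_r a0 0). assert (m3 := Rmax_l b0 0). assert (m4 := Rmax_r b0 0).
      exists a, b. split; [lra|]. split; [lra|]. intros pr.
      assert (cp : cont_on (fun x => fN d G x - Gres d G x)) by (intros x hx; apply (c_minus (fN d G) (Gres d G)); auto).
      assert (E := est_int (fN d G) (fun y => BB d G g1 y + PhiN d y) _ _ (2 / d^2) (1/6) (2 / d^2) a b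
         ltac:(lra) ltac:(lra) ltac:(lra) cfN cp cw
         ltac:(intros x hx; apply (DPsi _ _ _ _ _ H); lra)
         ltac:(intros x hx; cbv beta; replace (fN d G x - (fN d G x - Gres d G x)) with (Gres d G x) by ring;
               destruct (Mb x hx) as [hM [h1 h2]]; unfold Gres; cbv beta;
               replace (1/6 * uu G x ^ 2) with (uu G x ^ 2 / 6) by field;
               apply bG; try lra; nra)
         ltac:(assert (0 < 2 / d^2) by (apply Rdiv_lt_0_compat; nra); lra) ltac:(lra)
         ltac:(intros; apply (energy _ _ _ _ H Bu Bv); lra) pr).
      cbv beta in E. apply Rabs_def2 in Ba. apply Rabs_def2 in Bb.
      assert (Rabs (RiemannInt pr - (PhiN d b - PhiN d a)) <= 2 * (2 / d ^ 2) + 1 / 6 * (2 / d ^ 2) + eps).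
      { replace (RiemannInt pr - (PhiN d b - PhiN d a)) with
          ((RiemannInt pr - (BB d G g1 b + PhiN d b - (BB d G g1 a + PhiN d a))) + (BB d G g1 b - BB d G g1 a)) by ring.
        eapply Rle_trans. apply Rabs_triang. apply Rplus_le_compat. auto.
        apply Rabs_le. lra. }
      assert (2 * (2 / d ^ 2) + 1 / 6 * (2 / d ^ 2) <= 5 / d^2).
      { assert (0 < 1 / d^2) by (apply Rdiv_lt_0_compat; nra).
        replace (2 * (2 / d ^ 2) + 1 / 6 * (2 / d ^ 2)) with ((13/3) * (1 / d^2)) by (field; lra).
        replace (5 / d^2) with (5 * (1 / d^2)) by (field; lra). lra. }
      lra.
    + unfold PhiN. cont; lra.
    + unfold PhiN. cont; lra.
  -
    replace (- 2 / 3) with (PhiD 1 - PhiD (-1)) by (unfold PhiD; field).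
    apply (improper_bound _ _ _ _ hD).
    + intros eps heps a0 b0 ha0 hb0.
      assert (m1 := Rmin_l a0 0). assert (m2 := Rmin_r a0 0). assert (m3 := Rmax_l b0 0). assert (m4 := Rmax_r b0 0).
      set (a := (-1 + Rmin a0 0)/2). set (b := (1 + Rmax b0 0)/2). exists a, b.
      assert (-1 < Rmin a0 0) by (unfold Rmin; destruct Rle_dec; lra).
      assert (Rmax b0 0 < 1) by (unfold Rmax; destruct Rle_dec; lra).
      split; [unfold a; lra|]. split; [unfold b; lra|]. intros pr.
      assert (hab : a <= b) by (unfold a, b; lra).
      assert (cp : cont_on (fun x => -(1/2) * (1 - x^2))) by (intros x hx; cont; lra).
      assert (D1 : forall x, a <= x <= b -> derivable_pt_lim PhiD x (-(1/2) * (1 - x^2))).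
      { intros x hx; unfold PhiD; eapply d_ext; [der; try lra | unfold Rsqr; simpl; field]. }
      assert (D2 : forall x, -1 < x < 1 -> Rabs (fD d G x - -(1/2) * (1 - x^2)) <= 2 / d + d * uu G x ^ 2).
      { intros x hx; rewrite fD_id by lra; destruct (Mb x hx) as [hM [h1 h2]]; apply bD; auto; nra. }
      assert (D3 : 0 <= 2 / d) by (assert (0 < 2 / d) by (apply Rdiv_lt_0_compat; nra); lra).
      assert (ha' : -1 < a) by (unfold a; lra). assert (hb' : b < 1) by (unfold b; lra).
      assert (E := est_int (fD d G) PhiD _ (fun x => uu G x ^ 2) (2 / d) d (2 / d^2) a b
         ha' hab hb' cfD cp cw D1 D2 D3 ltac:(lra)
         ltac:(intros; apply (energy _ _ _ _ H Bu Bv); lra) pr).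
      replace (2 * (2 / d) + d * (2 / d ^ 2)) with (6 / d) in E by (field; lra).
      lra.
    + unfold PhiD. cont; lra.
    + unfold PhiD. cont; lra.
Qed.

Lemma from_solves d G : 2 <= d -> solves_gd d G -> exists g1 p1,
  HYP d G g1 p1 /\ BI (fun x => uu G x ^ 2) /\ BI (fun x => vv g1 x ^ 2).
Proof.
  intros hd [g1 [p1 [HG [[[l1 V1] [l2 V2]] HE]]]].
  exists g1, p1.
  assert (H : HYP d G g1 p1).
  { split; auto. split; auto. split.
    - intros x hx. apply (HE x hx).
    - intros x hx. destruct (HE x hx) as [_ E]. rewrite Rpow32 in E by nra.
      fold (sq x) in E. assert (0 < 1 - x^2) by nra. apply (Rmult_eq_reg_l (1 - x^2)); [|lra].
      field_simplify; [|lra]. lra. }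
  split; auto.
  assert (cG := hyp_cG _ _ _ _ H). assert (cg1 := hyp_cg1 _ _ _ _ H).
  assert (B1 : BI (fun x => (G x / sqrt (1 - x ^ 2)) ^ 2)).
  { apply (BI_of_improper _ l1); auto.
    - intros x hx. cont; try (apply cG; auto); try nra. apply Rgt_not_eq, sqrt_lt_R0; nra.
    - intros; apply pow2_ge_0. }
  assert (B2 : BI (fun x => (sqrt (1 - x ^ 2) * g1 x) ^ 2)).
  { apply (BI_of_improper _ l2); auto.
    - intros x hx. cont; try (apply cg1; auto); try nra.
    - intros; apply pow2_ge_0. }
  split.
  - apply (BI_dom _ _ _ 2 0 (1/2) B1 B1); try lra.
    + intros x hx. apply (c_pow (uu G)). apply (cuu _ _ _ _ H); auto.
    + intros x hx. split. apply pow2_ge_0.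
      unfold uu, ee, sq. assert (0 < sqrt (1 - x^2)) by (apply sqrt_lt_R0; nra).
      replace ((G x + sqrt (1 - x ^ 2) / 2) / sqrt (1 - x ^ 2)) with (G x / sqrt (1 - x ^ 2) + 1/2) by (field; lra).
      assert (0 <= (G x / sqrt (1 - x ^ 2) - 1/2)^2) by apply pow2_ge_0. nra.
  - apply (BI_dom _ _ _ 2 0 (1/2) B2 B2); try lra.
    + intros x hx. apply (c_pow (vv g1)). apply (cvv _ _ _ _ H); auto.
    + intros x hx. split. apply pow2_ge_0. unfold vv, sq.
      assert (0 <= (sqrt (1 - x ^ 2) * g1 x + x/2)^2) by apply pow2_ge_0. nra.
Qed.

Lemma final_alg d lN lD eps : 18 <= d -> eps > 0 -> 18 / eps <= d ->
  Rabs (lN - (- 1 / (9 * d))) <= 5 / d^2 -> Rabs (lD - (- 2 / 3)) <= 6 / d ->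
  Rabs (lN / lD - 1 / (6 * d)) <= eps / d.
Proof.
  intros hd he hde hN hD.
  apply Rabs_le_inv in hN. apply Rabs_le_inv in hD.
  assert (h6 : 6 / d <= 1/3) by (apply (Rmult_le_reg_l d); [lra|]; field_simplify; lra).
  assert (hl : lD <= -1/3) by lra.
  assert (E : lN / lD - 1 / (6 * d) = (6 * d * lN - lD) / (6 * d * lD)) by (field; lra).
  assert (EN : 6 * d * lN - lD = 6 * d * (lN - (- 1 / (9 * d))) - (lD - (-2/3))) by (field; lra).
  assert (B1 : Rabs (6 * d * lN - lD) <= 36 / d).
  { rewrite EN. apply Rabs_le.
    assert (6 * d * (5 / d^2) = 30 / d) by (field; lra).
    assert (6 * d * (lN - (- 1 / (9 * d))) <= 6 * d * (5 / d^2)) by (apply Rmult_le_compat_l; lra).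
    assert (6 * d * (- (5 / d^2)) <= 6 * d * (lN - (- 1 / (9 * d)))) by (apply Rmult_le_compat_l; lra).
    replace (36 / d) with (30 / d + 6 / d) by (field; lra). lra. }
  rewrite E. unfold Rdiv at 1. rewrite Rabs_mult. rewrite Rabs_inv by nra.
  rewrite (Rabs_left (6 * d * lD)) by nra.
  assert (hden : 2 * d <= - (6 * d * lD)) by nra.
  assert (0 < / - (6 * d * lD)) by (apply Rinv_0_lt_compat; nra).
  assert (/ - (6 * d * lD) <= / (2 * d)) by (apply Rinv_le_contravar; nra).
  assert (0 <= Rabs (6 * d * lN - lD)) by apply Rabs_pos.
  apply Rle_trans with ((36 / d) * / (2 * d)). apply Rmult_le_compat; auto; lra.
  replace (36 / d * / (2 * d)) with ((18 / d) * (1 / d)) by (field; lra).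
  replace (eps / d) with (eps * (1 / d)) by (field; lra).
  assert (0 < 1 / d) by (apply Rdiv_lt_0_compat; lra).
  assert (18 / d <= eps). { apply (Rmult_le_reg_l d); [lra|]. replace (d * (18 / d)) with 18 by (field; lra).
    apply (Rmult_le_reg_l (/ eps)). apply Rinv_0_lt_compat; lra.
    replace (/ eps * (d * eps)) with d by (field; lra). unfold Rdiv in hde. lra. }
  apply Rmult_le_compat_r; lra.
Qed.

Theorem propositionA2 (g : R -> R -> R)
  (Hg : forall d, d > 0 -> solves_gd d (g d)) :
  forall eps, eps > 0 -> exists D, D > 0 /\
    forall d, d > D ->
      exists N Dn,
        improper_int (c2_num_integrand d (g d)) 0 PI N /\
        improper_int (c2_den_integrand d (g d)) 0 PI Dn /\
        Rabs (N / Dn - 1 / (6 * d)) <= eps / d.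
Proof.
  intros eps heps. assert (h18 : 0 < 18 / eps) by (apply Rdiv_lt_0_compat; lra).
  exists (18 + 18 / eps). split; [lra|]. intros d hd.
  destruct (from_solves d (g d) ltac:(lra) (Hg d ltac:(lra))) as [g1 [p1 [H [Bu Bv]]]].
  destruct (per_d _ _ _ _ H Bu Bv) as [lN [lD [hN [hD [eN eD]]]]].
  assert (cG := hyp_cG _ _ _ _ H).
  assert (cfD : cont_on (fD d (g d))).
  { intros x hx. unfold fD, h_d, M_d. cont; try (apply cG; auto); try lra; try nra.
    apply Rgt_not_eq, sqrt_lt_R0; nra. }
  assert (cfN : cont_on (fN d (g d))).
  { intros x hx. unfold fN, h_d, M_d. cont; try (apply cG; auto); try lra; try nra.
    apply Rgt_not_eq, sqrt_lt_R0; nra. }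
  exists lN, lD. split; [|split].
  - apply (improper_ext (fun t => fN d (g d) (cos t) * sin t)); [|apply subst_cos; auto].
    intros t. unfold fN, c2_num_integrand.
    assert (E := sin2_cos2 t). unfold Rsqr in E. replace (1 - cos t ^ 2) with (sin t ^ 2) by (simpl; lra). ring.
  - apply (improper_ext (fun t => fD d (g d) (cos t) * sin t)); [|apply subst_cos; auto].
    intros t. unfold fD, c2_den_integrand.
    assert (E := sin2_cos2 t). unfold Rsqr in E. replace (1 - cos t ^ 2) with (sin t ^ 2) by (simpl; lra). ring.
  - apply final_alg; auto; lra.
Qed.
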